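(* Let $\mathcal{A}$ be a central, essential hyperplane arrangement in $\mathbb{R}^d$, let $\ell$ be a modular coatom of $\mathcal{A}$, and let $c$ be a chamber incident to $\ell$. Write $\mathcal{A}_\ell$ for the set of hyperplanes of $\mathcal{A}$ containing $\ell$. (i) The set of chambers $c'$ with $c'/\ell=c/\ell$ can be linearly ordered as $c_1=c,c_2,\ldots,c_t$ so that $$\varnothing=L_1(c,c_1)\subset L_1(c,c_2)\subset\cdots\subset L_1(c,c_t)=\mathcal{A}\setminus\mathcal{A}_\ell,$$ each inclusion adding exactly one hyperplane. This induces a linear order $H_1,H_2,\ldots$ on $\mathcal{A}\setminus\mathcal{A}_\ell$, listing the hyperplanes in the order in which they are added along this chain. (ii) With respect to this linear order, if $i<j<k$ and $c$ is also incident to $\ell+(H_i\cap H_k)$, then $H_i\cap H_j=H_i\cap H_k=H_j\cap H_k$.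
   Context: A central, essential arrangement is a finite set of linear hyperplanes in $\mathbb{R}^d$ with common intersection $\{0\}$. Chambers are connected components of the complement of their union; $L_1(c,c')$ is the set of hyperplanes separating chambers $c,c'$. A coatom is a line $\ell$ that is an intersection of hyperplanes of $\mathcal{A}$; it is modular if for every pair of distinct hyperplanes $H,H'\in\mathcal{A}$ not containing $\ell$, the hyperplane $\ell+(H\cap H')$ belongs to $\mathcal{A}$. For a chamber $c$, $c/\ell$ denotes the chamber of the localized arrangement $\{H/\ell: H\in\mathcal{A}, H\supseteq\ell\}$ in $\mathbb{R}^d/\ell$ containing the image of $c$. A chamber $c$ is incident to a subspace $X$ if the closure of $c$ meets $X$ in a set of the same dimension as $X$. *)

(* Defs.v *)
(* R^d is modelled as 'rV[R]_d with the
   (product = Euclidean) topology of matrix_topology. *)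
From HB Require Import structures.
From mathcomp Require Import all_boot all_order all_algebra.
From mathcomp Require Import all_classical all_reals all_analysis.
Set Implicit Arguments. Unset Strict Implicit. Unset Printing Implicit Defensive.
Import Order.TTheory GRing.Theory Num.Theory.
Import numFieldNormedType.Exports.
Local Open Scope classical_set_scope.
Local Open Scope ring_scope.

Section Arrangements.
Variables (R : realType) (d : nat).
Local Notation V := 'rV[R]_d.

Definition lin (a : V) (x : V) : R := (x *m a^T) 0 0.

Definition is_hyperplane (H : set V) : Prop :=
  exists a : V, a != 0 /\ H = [set x | lin a x = 0].

Definition central_arrangement (A : set (set V)) : Prop :=
  finite_set A /\ (forall H, A H -> is_hyperplane H).

Definition essential (A : set (set V)) : Prop :=
  \bigcap_(H in A) H = [set 0].

Definition arr_union (A : set (set V)) : set V := \bigcup_(H in A) H.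

Definition chamber (A : set (set V)) (C : set V) : Prop :=
  exists x : V, ~ arr_union A x /\
    C = @connected_component V (~` arr_union A) x.

Definition separates (H c c' : set V) : Prop :=
  exists a : V, a != 0 /\ H = [set x | lin a x = 0] /\
    c `<=` [set x | 0 < lin a x] /\ c' `<=` [set x | lin a x < 0].

Definition L1 (A : set (set V)) (c c' : set V) : set (set V) :=
  [set H | A H /\ separates H c c'].

Definition is_line (l : set V) : Prop :=
  exists v : V, v != 0 /\ l = [set k *: v | k in [set: R]].

Definition is_intersection_of (A : set (set V)) (X : set V) : Prop :=
  exists S : set (set V), S `<=` A /\ X = \bigcap_(H in S) H.

Definition coatom (A : set (set V)) (l : set V) : Prop :=
  is_line l /\ is_intersection_of A l.

(* Minkowski sum of two sets (for subspaces: the subspace sum) *)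
Definition ssum (X Y : set V) : set V := [set x + y | x in X & y in Y].

Definition modular_coatom (A : set (set V)) (l : set V) : Prop :=
  coatom A l /\
  forall H H', A H -> A H' -> H <> H' -> ~ (l `<=` H) -> ~ (l `<=` H') ->
    A (ssum l (H `&` H')).

Definition localization (A : set (set V)) (l : set V) : set (set V) :=
  [set H | A H /\ l `<=` H].

(* c / l = c' / l : c and c' lie in the same chamber of the localized
   arrangement A_l (chambers of A_l/l in R^d/l correspond to chambers of
   A_l in R^d via the projection R^d -> R^d/l). *)
Definition same_loc (A : set (set V)) (l c c' : set V) : Prop :=
  exists C, chamber (localization A l) C /\ c `<=` C /\ c' `<=` C.

(* (affine) dimension of a set: S has affine dimension n when it contains
   n+1 affinely independent points but not n+2. *)
Definition aff_indep_pts (S : set V) (n : nat) : Prop :=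
  exists (p0 : V) (p : 'I_n -> V), S p0 /\ (forall i, S (p i)) /\
    row_free (\matrix_(i < n) (p i - p0)).

Definition has_dim (S : set V) (n : nat) : Prop :=
  aff_indep_pts S n /\ ~ aff_indep_pts S n.+1.

Definition incident (c X : set V) : Prop :=
  exists n, has_dim X n /\ has_dim (@closure V c `&` X) n.

End Arrangements.

(* Main.v *)
Require Import Defs.
From HB Require Import structures.
From mathcomp Require Import all_boot all_order all_algebra.
From mathcomp Require Import all_classical all_reals all_analysis.
From mathcomp Require Import ring lra.
Set Implicit Arguments. Unset Strict Implicit. Unset Printing Implicit Defensive.
Import Order.TTheory GRing.Theory Num.Theory.
Import numFieldNormedType.Exports.
Local Open Scope classical_set_scope.
Local Open Scope ring_scope.


Section Lin.
Variables (R : realType) (d : nat).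
Local Notation V := 'rV[R]_d.

Lemma linE (a x : V) : lin a x = \sum_j x 0 j * a 0 j.
Proof. by rewrite /lin mxE; apply: eq_bigr => j _; rewrite mxE. Qed.

Lemma linD (a x y : V) : lin a (x + y) = lin a x + lin a y.
Proof. by rewrite /lin mulmxDl mxE. Qed.
Lemma linZ (a x : V) k : lin a (k *: x) = k * lin a x.
Proof. by rewrite /lin -scalemxAl mxE. Qed.
Lemma linN (a x : V) : lin a (- x) = - lin a x.
Proof. by rewrite -scaleN1r linZ mulN1r. Qed.
Lemma linB (a x y : V) : lin a (x - y) = lin a x - lin a y.
Proof. by rewrite linD linN. Qed.
Lemma lin0 (a : V) : lin a 0 = 0.
Proof. by rewrite /lin mul0mx mxE. Qed.
Lemma linDl (a b x : V) : lin (a + b) x = lin a x + lin b x.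
Proof. by rewrite /lin linearD /= mulmxDr mxE. Qed.
Lemma linZl (a x : V) k : lin (k *: a) x = k * lin a x.
Proof. by rewrite /lin linearZ /= -scalemxAr mxE. Qed.
Lemma linBl (a b x : V) : lin (a - b) x = lin a x - lin b x.
Proof. by rewrite linDl -scaleN1r linZl mulN1r. Qed.
Lemma linC (a x : V) : lin a x = lin x a.
Proof. by rewrite !linE; apply: eq_bigr => j _; rewrite mulrC. Qed.

Lemma lin_gt0 (a : V) : a != 0 -> 0 < lin a a.
Proof.
move=> a0; rewrite linE lt0r sumr_ge0 ?andbT; last by move=> j _; rewrite -expr2 sqr_ge0.
apply: contra a0 => /eqP /psumr_eq0P H; apply/eqP/rowP => j; rewrite mxE.
have := H (fun i _ => (ltac:(by rewrite -expr2 sqr_ge0) : 0 <= a 0 i * a 0 i)) j isT => /eqP; by rewrite -expr2 sqrf_eq0 => /eqP.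
Qed.

Lemma lin_mul (a : V) n (u : 'rV[R]_n) (M : 'M[R]_(n, d)) :
  lin a (u *m M) = \sum_i u 0 i * lin a (row i M).
Proof.
rewrite /lin -mulmxA mxE. apply: eq_bigr => i _.
by rewrite -row_mul [in RHS]mxE.
Qed.

Lemma lin_continuous (a : V) : continuous (lin a).
Proof.
have -> : lin a = (fun x : V => \sum_(j <- index_enum 'I_d | true) (fun j x => x 0 j * a 0 j) j x).
  by apply: funext => x; rewrite linE.
apply: continuous_big => //; last first.
  move=> j _ x; apply: continuousM; first exact: coord_continuous.
  exact: cst_continuous.
move=> [x y]; apply: cvgD; [exact: cvg_fst | exact: cvg_snd].
Qed.

Lemma ker_functional (f g : V) : g != 0 ->
  (forall x, lin g x = 0 -> lin f x = 0) ->
  forall x, lin f x = (lin f g / lin g g) * lin g x.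
Proof.
move=> g0 H x; have gg := lin_gt0 g0.
have := H (x - (lin g x / lin g g) *: g).
rewrite !linB !linZ mulfVK ?gt_eqF // subrr => /(_ erefl) /eqP.
rewrite subr_eq0 => /eqP ->; by rewrite [LHS]mulrC mulrA mulrAC.
Qed.

End Lin.


Section Hyp.
Variables (R : realType) (d : nat).
Local Notation V := 'rV[R]_d.
Local Notation ker a := [set x : V | lin a x = 0].

Lemma ker_sub_eq (a b : V) : a != 0 -> b != 0 -> ker a `<=` ker b -> ker a = ker b.
Proof.
move=> a0 b0 sab; have E := ker_functional a0 sab.
set al := lin b a / lin a a in E.
have al0 : al != 0.
  apply: contraTneq (lin_gt0 b0) => al0; by rewrite E al0 mul0r ltxx.
apply/seteqP; split => // x /= bx; apply/eqP.
by move: bx; rewrite E => /eqP; rewrite mulf_eq0 (negbTE al0).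
Qed.

Lemma ker_not_sub (a b : V) : a != 0 -> b != 0 -> ker a <> ker b ->
  exists u, lin a u = 0 /\ lin b u != 0.
Proof.
move=> a0 b0 ne; apply: contrapT => H; apply: ne; apply: ker_sub_eq => // x /= ax.
apply: contrapT => bx; apply: H; exists x; split => //; exact/eqP.
Qed.

Lemma three_hyp (a1 a2 a3 : V) : a1 != 0 -> a2 != 0 -> a3 != 0 ->
  ker a1 <> ker a2 -> ker a1 <> ker a3 -> ker a2 <> ker a3 ->
  ker a1 `&` ker a3 `<=` ker a2 ->
  ker a1 `&` ker a2 = ker a1 `&` ker a3 /\ ker a1 `&` ker a3 = ker a2 `&` ker a3.
Proof.
move=> a10 a20 a30 n12 n13 n23 sub.
have [u [u1 u3]] := ker_not_sub a10 a30 n13.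
pose ga := lin a2 u / lin a3 u.
have E1 : forall x, lin a1 x = 0 -> lin a2 x - ga * lin a3 x = 0.
  move=> x x1.
  have := sub (x - (lin a3 x / lin a3 u) *: u).
  rewrite /= !linB !linZ x1 u1 mulr0 subr0 mulfVK // subrr => /(_ (conj erefl erefl)).
  move/eqP; rewrite subr_eq0 => /eqP ->; rewrite /ga.
  by rewrite mulrAC [X in _ - X]mulrC mulrA subrr.
have E2 : forall x, lin a1 x = 0 -> lin (a2 - ga *: a3) x = 0.
  by move=> x /E1; rewrite linBl linZl.
have E3 := ker_functional a10 E2.
set be := _ / _ in E3.
have E x : lin a2 x = be * lin a1 x + ga * lin a3 x.
  by have := E3 x; rewrite linBl linZl => <-; rewrite subrK.
have ga0 : ga != 0.
  apply/eqP => g0; apply: n12; apply: ker_sub_eq => // x /= x1.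
  by rewrite E x1 g0 !mul0r mulr0 addr0.
have be0 : be != 0.
  apply/eqP => b0; apply: n23; apply/esym; apply: ker_sub_eq => // x /= x3.
  by rewrite E x3 b0 !mul0r mulr0 addr0.
split; apply/seteqP; split => x /= [].
- move=> x1 x2; split => //; apply/eqP; move: x2; rewrite E x1 mulr0 add0r => /eqP.
  by rewrite mulf_eq0 (negbTE ga0).
- move=> x1 x3; split => //; by rewrite E x1 x3 !mulr0 addr0.
- move=> x1 x3; split => //; by rewrite E x1 x3 !mulr0 addr0.
- move=> x2 x3; split => //; apply/eqP; move: x2; rewrite E x3 mulr0 addr0 => /eqP.
  by rewrite mulf_eq0 (negbTE be0).
Qed.

End Hyp.


Section Cells.
Variables (R : realType) (d : nat).
Local Notation V := 'rV[R]_d.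
Local Notation ker a := [set x : V | lin a x = 0].

Definition cell (A : set (set V)) (x : V) : set V :=
  [set y | forall H a, A H -> H = ker a -> 0 < lin a x * lin a y].

Variable A : set (set V).
Hypothesis hA : forall H, A H -> is_hyperplane H.

Lemma cell_compl x y : cell A x y -> ~ arr_union A y.
Proof.
move=> cy [H AH Hy]; have [a [a0 Ha]] := hA AH.
have := cy H a AH Ha; move: Hy; rewrite Ha /= => ->; by rewrite mulr0 ltxx.
Qed.

Lemma cell_self x : ~ arr_union A x -> cell A x x.
Proof.
move=> nx H a AH Ha; rewrite -expr2 exprn_even_gt0 //.
apply/eqP => ax; apply: nx; exists H => //; by rewrite Ha.
Qed.

Lemma cell_sym x y : cell A x y -> cell A y x.
Proof. move=> cy H a AH Ha; rewrite mulrC; exact: (cy H a AH Ha). Qed.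

Lemma pmul_trans (p q r : R) : 0 < p * q -> 0 < q * r -> 0 < p * r.
Proof.
move=> pq qr; have : 0 < (p * q) * (q * r) by apply: mulr_gt0.
rewrite mulrA -(mulrA p) -expr2 mulrAC => h.
have q0 : q != 0 by apply: contraTneq pq => ->; rewrite mulr0 ltxx.
have q2 : 0 < q ^+ 2 by rewrite exprn_even_gt0 // q0 orbT.
by rewrite -(pmulr_lgt0 _ q2).
Qed.

Lemma cell_trans x y z : cell A x y -> cell A y z -> cell A x z.
Proof. move=> cy cz H a AH Ha; exact: pmul_trans (cy H a AH Ha) (cz H a AH Ha). Qed.

Lemma cell_eq x y : cell A x y -> cell A x = cell A y.
Proof.
move=> cy; apply/seteqP; split => z cz.
- exact: cell_trans (cell_sym cy) cz.
- exact: cell_trans cy cz.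
Qed.

Lemma cell_convex x y z t : cell A x y -> cell A x z -> 0 <= t <= 1 ->
  cell A x ((1 - t) *: y + t *: z).
Proof.
move=> cy cz /andP[t0 t1] H a AH Ha; rewrite linD !linZ mulrDr.
have h2 := cy H a AH Ha; have h1 := cz H a AH Ha.
rewrite le_eqVlt in t0; case/orP: t0 => [/eqP <-|t0].
  by rewrite subr0 mul0r mul1r mulr0 addr0.
rewrite le_eqVlt in t1; case/orP: t1 => [/eqP ->|t1].
  by rewrite subrr mul0r mul1r mulr0 add0r.
apply: addr_gt0.
  rewrite mulrCA; apply: mulr_gt0 => //; by rewrite subr_gt0.
by rewrite mulrCA; apply: mulr_gt0.
Qed.

Lemma cell_sub_component x : ~ arr_union A x ->
  cell A x `<=` connected_component (~` arr_union A) x.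
Proof.
move=> nx y cy.
pose f := fun t : R => (1 - t) *: x + t *: y.
have cf : continuous f.
  move=> t; apply: cvgD.
    apply: cvgZr_tmp; apply: cvgB; [exact: cvg_cst|exact: cvg_id].
  by apply: cvgZr_tmp; exact: cvg_id.
have S : connected (f @` `[0, 1]).
  apply: connected_continuous_connected; first exact: segment_connected.
  by move=> t; apply: continuous_subspaceT.
apply: (connected_component_max (B := f @` `[0, 1])) => //.
- exists 0; first by rewrite /= in_itv /= lexx ler01.
  by rewrite /f subr0 scale1r scale0r addr0.
- move=> _ [t t01 <-]; apply: (@cell_compl x); rewrite /f.
  apply: cell_convex; [exact: cell_self|exact: cy|by move: t01; rewrite /= in_itv].
- exists 1; first by rewrite /= in_itv /= lexx ler01.
  by rewrite /f subrr scale0r scale1r add0r.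
Qed.

Lemma component_sub_cell x : ~ arr_union A x ->
  connected_component (~` arr_union A) x `<=` cell A x.
Proof.
move=> nx y Ky H a AH Ha.
have cK : connected (connected_component (~` arr_union A) x) by exact: connected.component_connected.
have Kx : connected_component (~` arr_union A) x x by exact: connected_component_refl.
have sK : connected_component (~` arr_union A) x `<=` ~` arr_union A by exact: connected_component_sub.
have I : is_interval (lin a @` connected_component (~` arr_union A) x).
  apply/connected_intervalP; apply: connected_continuous_connected => //.
  move=> z; apply: continuous_subspaceT; exact: lin_continuous.
have n0 : forall z, connected_component (~` arr_union A) x z -> lin a z != 0.
  move=> z Kz; apply/eqP => az; apply: (sK _ Kz); exists H => //; by rewrite Ha.
have ax := n0 _ Kx; have ay := n0 _ Ky.
rewrite lt0r mulf_neq0 //=; apply: contraT; rewrite -ltNge => neg.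
have : (lin a @` connected_component (~` arr_union A) x) 0.
  case: (ltP (lin a x) 0) => hx.
  - apply: (I (lin a x) (lin a y)); [exact: imageP|exact: imageP|].
    rewrite ltW //=; nra.
  - apply: (I (lin a y) (lin a x)); [exact: imageP|exact: imageP|].
    rewrite hx andbT; nra.
by case=> z Kz az; move: (n0 _ Kz); rewrite az eqxx.
Qed.

Lemma chamberP c : chamber A c <-> exists x, ~ arr_union A x /\ c = cell A x.
Proof.
split => [[x [nx ->]]|[x [nx ->]]]; exists x; split => //; apply/seteqP; split.
- exact: component_sub_cell.
- exact: cell_sub_component.
- exact: cell_sub_component.
- exact: component_sub_cell.
Qed.

End Cells.


Section Basic.
Variables (R : realType) (d : nat).
Local Notation V := 'rV[R]_d.
Local Notation ker a := [set x : V | lin a x = 0].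

Lemma ker0 : ker (0 : V) = setT.
Proof. by apply/seteqP; split => // x _ /=; rewrite /lin trmx0 mulmx0 mxE. Qed.

Lemma hyp_normal_nz (H : set V) a : is_hyperplane H -> H = ker a -> a != 0.
Proof.
move=> [b [b0 Hb]] Ha; apply/eqP => a0; move: Ha; rewrite a0 ker0 => HT.
have : H b by rewrite HT.
by rewrite Hb /= => /eqP; rewrite gt_eqF // lin_gt0.
Qed.

Lemma normal_prop (H : set V) a b : is_hyperplane H -> H = ker a -> H = ker b ->
  exists2 al, al != 0 & forall x, lin a x = al * lin b x.
Proof.
move=> hH Ha Hb; have a0 := hyp_normal_nz hH Ha; have b0 := hyp_normal_nz hH Hb.
have sub : forall x, lin b x = 0 -> lin a x = 0.
  move=> x bx; have Hx : H x by rewrite Hb.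
  by move: Hx; rewrite Ha.
have E := ker_functional b0 sub.
exists (lin a b / lin b b) => //; apply/eqP => al0.
by have := lin_gt0 a0; rewrite E al0 mul0r ltxx.
Qed.

Definition nrm (H : set V) : V := xget 0 (fun a : V => a != 0 /\ H = ker a).

Lemma nrmP H : is_hyperplane H -> nrm H != 0 /\ H = ker (nrm H).
Proof. by move=> [a Ha]; apply: (xgetPex 0 (P := fun a : V => a != 0 /\ H = ker a)); exists a. Qed.

Lemma closure_lin_ge (c : set V) b y : (forall z, c z -> 0 <= lin b z) ->
  closure c y -> 0 <= lin b y.
Proof.
move=> cb cy.
have cl : closed (lin b @^-1` [set r : R | 0 <= r]).
  apply: preimage_closed; last exact: closed_ge.
  move=> z _; exact: lin_continuous.
have : closure (lin b @^-1` [set r : R | 0 <= r]) y by apply: closureS cy.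
by rewrite -(closure_id _).1.
Qed.

Lemma sign_case (bx by_ : R) : bx * by_ < 0 ->
  let t := bx / (bx - by_) in 0 <= t <= 1 /\ (1 - t) * bx + t * by_ = 0.
Proof.
move=> neg t.
have D0 : bx - by_ != 0.
  apply/eqP => D; have : bx = by_ by apply/eqP; rewrite -subr_eq0 D.
  move=> e; move: neg; rewrite e; nra.
split; last by rewrite /t; field.
case: (ltP 0 bx) => hx.
- have hy : by_ < 0 by nra.
  have Dp : 0 < bx - by_ by lra.
  apply/andP; split; first by apply: divr_ge0; apply: ltW.
  by rewrite /t ler_pdivrMr // mul1r; lra.
- have hy : 0 < by_.
    have : bx != 0 by apply/eqP => e; move: neg; rewrite e mul0r ltxx.
    move=> bx0; nra.
  have Dn : bx - by_ < 0 by lra.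
  have Dp : 0 < - (bx - by_) by lra.
  rewrite /t -divrNN; apply/andP; split; first by apply: divr_ge0; lra.
  by rewrite ler_pdivrMr // mul1r; lra.
Qed.

Lemma widen_lift n (i : 'I_n) : widen_ord (leqnSn n) i = lift ord_max i.
Proof. by apply: val_inj; rewrite /= /bump leqNgt ltn_ord. Qed.

Lemma extend_indep (K : set V) n p0 (p : 'I_n -> V) z : K p0 -> (forall i, K (p i)) ->
  K (p0 + z) -> row_free (\matrix_(i < n) (p i - p0)) ->
  ~ (exists u, z = u *m \matrix_(i < n) (p i - p0)) -> aff_indep_pts K n.+1.
Proof.
move=> Kp0 Kp Kz rf nz.
pose q (i : 'I_n.+1) := if unlift ord_max i is Some i' then p i' else p0 + z.
exists p0, q; split => //; split.
  by move=> i; rewrite /q; case: unliftP => [i' _|_].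
apply: inj_row_free => w Hw.
set M := \matrix_(i < n) (p i - p0) in rf nz.
pose w' : 'rV_n := \row_i w 0 (widen_ord (leqnSn n) i).
have E : w *m \matrix_(i < n.+1) (q i - p0) = w' *m M + w 0 ord_max *: z.
  rewrite !mulmx_sum_row big_ord_recr /=; congr (_ + _).
    apply: eq_bigr => i _; rewrite !rowK mxE widen_lift /q liftK.
    by [].
  by rewrite rowK /q unlift_none addrC addKr.
rewrite E in Hw.
have wm0 : w 0 ord_max = 0.
  apply: contrapT => /eqP wm; apply: nz.
  exists ((- (w 0 ord_max)^-1) *: w'); rewrite -scalemxAl.
  have : w' *m M = - (w 0 ord_max *: z) by apply/eqP; rewrite -addr_eq0 Hw.
  by move=> ->; rewrite scalerN scaleNr opprK scalerA mulVf // scale1r.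
rewrite wm0 scale0r addr0 in Hw.
have w'0 : w' = 0 by apply/eqP; rewrite -(mulmx_free_eq0 _ rf) Hw.
apply/rowP => i; rewrite mxE; case: (unliftP ord_max i) => [i' ->|->] //.
by rewrite -widen_lift; have := congr1 (fun u : 'rV_n => u 0 i') w'0; rewrite !mxE.
Qed.

End Basic.


Section Main.
Variables (R : realType) (d : nat).
Local Notation V := 'rV[R]_d.
Local Notation ker a := [set x : V | lin a x = 0].
Variables (A : set (set V)) (l : set V) (v x0 : V).
Hypothesis hA : forall H, A H -> is_hyperplane H.
Hypothesis v0 : v != 0.
Hypothesis hl : l = [set k *: v | k in [set: R]].
Hypothesis hmod : forall H H', A H -> A H' -> H <> H' -> ~ l `<=` H -> ~ l `<=` H' ->
    A (ssum l (H `&` H')).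
Hypothesis hx0 : ~ arr_union A x0.
Hypothesis hvc : closure (cell A x0) v.

Lemma sub_l H a : A H -> H = ker a -> (l `<=` H <-> lin a v = 0).
Proof.
move=> AH Ha; rewrite Ha hl; split.
- by move=> /(_ v); apply; exists 1 => //; rewrite scale1r.
- by move=> av _ [k _ <-] /=; rewrite linZ av mulr0.
Qed.

Definition tv H : V := (- (lin (nrm H) v)^-1) *: nrm H.
Local Notation tau H y := (lin (tv H) y).

Lemma tau_v H : A H -> ~ l `<=` H -> tau H v = -1.
Proof.
move=> AH nl; have [n0 Hn] := nrmP (hA AH).
have nv : lin (nrm H) v != 0 by apply/eqP => /(sub_l AH Hn).
by rewrite /tv linZl mulNr mulVf.
Qed.

Lemma tau_H H z : A H -> H z -> tau H z = 0.
Proof.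
move=> AH Hz; have [n0 Hn] := nrmP (hA AH).
by rewrite /tv linZl; move: Hz; rewrite {1}Hn /= => ->; rewrite mulr0.
Qed.

Lemma lin_tau H a y : A H -> H = ker a -> ~ l `<=` H ->
  lin a y = - tau H y * lin a v.
Proof.
move=> AH Ha nl; have [n0 Hn] := nrmP (hA AH).
have [al al0 E] := normal_prop (hA AH) Ha Hn.
have nv : lin (nrm H) v != 0 by apply/eqP => /(sub_l AH Hn).
rewrite /tv linZl !E; field; exact: nv.
Qed.

Lemma orient H a : A H -> H = ker a -> ~ l `<=` H -> 0 < lin a x0 * lin a v.
Proof.
move=> AH Ha nl.
have ge : 0 <= lin (lin a x0 *: a) v.
  apply: (closure_lin_ge _ hvc) => z cz; rewrite linZl; apply: ltW; exact: cz H a AH Ha.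
rewrite linZl in ge; rewrite lt0r ge andbT mulf_neq0 //.
  by apply/eqP => ax; apply: hx0; exists H => //; rewrite Ha.
by apply/eqP => /(sub_l AH Ha).
Qed.

Lemma tau_x0_neg H : A H -> ~ l `<=` H -> tau H x0 < 0.
Proof.
move=> AH nl; have [n0 Hn] := nrmP (hA AH).
have := orient AH Hn nl; rewrite (lin_tau x0 AH Hn nl).
have nv : lin (nrm H) v != 0 by apply/eqP => /(sub_l AH Hn).
move=> h; have sq : 0 < lin (nrm H) v * lin (nrm H) v.
  by rewrite -expr2 exprn_even_gt0 // nv orbT.
nra.
Qed.

Definition loc := localization A l.

Lemma hAl : forall H, loc H -> is_hyperplane H.
Proof. by move=> H [AH _]; exact: hA. Qed.

Lemma x0_loc : ~ arr_union loc x0.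
Proof. by move=> [H [AH _] Hx]; apply: hx0; exists H. Qed.

Lemma cell_loc y : cell A x0 y -> cell loc x0 y.
Proof. by move=> cy H a [AH _] Ha; exact: (cy H a AH Ha). Qed.

Lemma modular_zero H H' p : A H -> A H' -> H <> H' -> ~ l `<=` H -> ~ l `<=` H' ->
  cell loc x0 p -> tau H p != tau H' p.
Proof.
move=> AH AH' ne nl nl' cp; apply/eqP => e.
have AK := hmod AH AH' ne nl nl'.
set K := ssum l (H `&` H') in AK.
have [n0 Hn] := nrmP (hA AH); have [n0' Hn'] := nrmP (hA AH').
have w_in : forall G, A G -> ~ l `<=` G -> G (p + tau G p *: v).
  move=> G AG nlG; have [nG HG] := nrmP (hA AG).
  suff : (ker (nrm G)) (p + tau G p *: v) by rewrite -HG.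
  rewrite /= linD linZ (lin_tau p AG HG nlG); ring.
have Kp : K p.
  exists (- tau H p *: v); first by rewrite hl; exists (- tau H p).
  exists (p + tau H p *: v); last by rewrite scaleNr addrCA addNr addr0.
  split; first exact: w_in.
  by rewrite e; exact: w_in.
have lK : l `<=` K.
  move=> y ly; exists y => //; exists 0; last by rewrite addr0.
  split; [rewrite Hn | rewrite Hn']; by rewrite /= lin0.
apply: (cell_compl hAl cp); exists K => //.
Qed.

Lemma sign_const b y : (forall p, cell loc x0 p -> lin b p != 0) ->
  cell loc x0 y -> 0 < lin b x0 * lin b y.
Proof.
move=> nz cy.
have cx := cell_self x0_loc.
have bx := nz _ cx; have by_ := nz _ cy.
rewrite lt0r mulf_neq0 //=; rewrite leNgt; apply/negP => neg.
have [/andP [t0 t1] e] := sign_case neg.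
set t := _ / _ in t0 t1 e.
have := nz _ (cell_convex cx cy (t := t) (introT andP (conj t0 t1))).
by rewrite linD !linZ e eqxx.
Qed.

Lemma order_pres H H' y : A H -> A H' -> H <> H' -> ~ l `<=` H -> ~ l `<=` H' ->
  cell loc x0 y -> 0 < (tau H x0 - tau H' x0) * (tau H y - tau H' y).
Proof.
move=> AH AH' ne nl nl' cy.
have := @sign_const (tv H - tv H') y; rewrite !linBl; apply => // p cp.
by rewrite linBl subr_eq0; apply: modular_zero.
Qed.

Variable s0 : seq (set V).
Hypothesis hs0 : A = [set` s0].

Definition inB (H : set V) : bool := `[< A H /\ ~ l `<=` H >].
Definition tle (H H' : set V) : bool := tau H' x0 <= tau H x0.
Definition slist := sort tle (undup (seq.filter inB s0)).

Lemma mem_slist H : (H \in slist) <-> (A H /\ ~ l `<=` H).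
Proof.
rewrite mem_sort mem_undup mem_filter /inB; split.
- by case/andP => /asboolP.
- move=> h; apply/andP; split; first exact/asboolP.
  by move: h.1; rewrite hs0.
Qed.

Lemma uniq_slist : uniq slist.
Proof. by rewrite sort_uniq undup_uniq. Qed.

Lemma sorted_slist : sorted tle slist.
Proof. apply: sort_sorted => a b; rewrite /tle; exact: le_total. Qed.

Local Notation m := (size slist).
Local Notation Hs k := (nth set0 slist k).
Local Notation T k := (tau (Hs k) x0).

Lemma Hs_prop k : (k < m)%N -> A (Hs k) /\ ~ l `<=` Hs k.
Proof. by move=> km; apply/mem_slist; exact: mem_nth. Qed.

Lemma Hs_inj i j : (i < m)%N -> (j < m)%N -> Hs i = Hs j -> i = j.
Proof.
move=> im jm e; apply/eqP; rewrite -(nth_uniq set0 im jm uniq_slist); exact/eqP.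
Qed.

Lemma T_lt i j : (i < j)%N -> (j < m)%N -> T j < T i.
Proof.
move=> ij jm; have im : (i < m)%N by apply: ltn_trans ij jm.
have tr : transitive tle by move=> b a c; rewrite /tle => h1 h2; apply: le_trans h2 h1.
have le : tle (Hs i) (Hs j) by apply: (sorted_ltn_nth tr set0 sorted_slist); rewrite ?inE.
rewrite lt_neqAle (le : T j <= T i) andbT; apply/eqP => e.
have [Ai nli] := Hs_prop im; have [Aj nlj] := Hs_prop jm.
have ne : Hs j <> Hs i by move=> /(Hs_inj jm im) ji; move: ij; rewrite ji ltnn.
by move: (modular_zero Aj Ai ne nlj nli (cell_self x0_loc)); rewrite e eqxx.
Qed.

Lemma T_le i j : (i <= j)%N -> (j < m)%N -> T j <= T i.
Proof.
rewrite leq_eqVlt => /orP [/eqP -> //|ij] jm; exact/ltW/T_lt.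
Qed.

Definition sk k := if k == 0%N then 0 else if (k < m)%N then (T k.-1 + T k) / 2
  else T k.-1 - 1.

Lemma sk_lt j k : (j < k)%N -> (k <= m)%N -> sk k < T j.
Proof.
move=> jk km; rewrite /sk; case: eqP => [k0|/eqP k0]; first by move: jk; rewrite k0.
have jk1 : (j <= k.-1)%N by rewrite -ltnS prednK // lt0n.
have k1m : (k.-1 < m)%N by apply: leq_trans km; rewrite prednK ?lt0n // leqnn.
have := T_le jk1 k1m; case: ifP => km' h.
  have := T_lt (i := k.-1) (j := k); rewrite prednK ?lt0n // => /(_ (leqnn _) km') h2.
  lra.
lra.
Qed.

Lemma sk_gt j k : (k <= j)%N -> (j < m)%N -> T j < sk k.
Proof.
move=> kj jm; have km : (k < m)%N by apply: leq_ltn_trans kj jm.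
rewrite /sk; case: eqP => [k0|/eqP k0].
  by have [Aj nlj] := Hs_prop jm; exact: tau_x0_neg.
rewrite km; have h1 := T_le kj jm.
have := T_lt (i := k.-1) (j := k); rewrite prednK ?lt0n // => /(_ (leqnn _) km) h2.
lra.
Qed.

Definition pk k := x0 + sk k *: v.

Lemma Hs_index H : A H -> ~ l `<=` H -> (index H slist < m)%N /\ H = Hs (index H slist).
Proof.
move=> AH nl; have Hin : H \in slist by apply/mem_slist.
by split; [rewrite index_mem | rewrite nth_index].
Qed.

Lemma lin_pk_l H a k : A H -> H = ker a -> l `<=` H -> lin a (pk k) = lin a x0.
Proof. by move=> AH Ha /(sub_l AH Ha) av; rewrite linD linZ av mulr0 addr0. Qed.

Lemma lin_pk H a k : A H -> H = ker a -> ~ l `<=` H ->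
  lin a (pk k) = (sk k - tau H x0) * lin a v.
Proof. by move=> AH Ha nl; rewrite linD linZ (lin_tau x0 AH Ha nl); ring. Qed.

Lemma nl_lav H a : A H -> H = ker a -> ~ l `<=` H -> lin a v != 0.
Proof. by move=> AH Ha nl; apply/eqP => /(sub_l AH Ha). Qed.

Lemma ax0_nz H a : A H -> H = ker a -> lin a x0 != 0.
Proof. by move=> AH Ha; apply/eqP => e; apply: hx0; exists H => //; rewrite Ha. Qed.

Lemma sk_ne j k : (k <= m)%N -> (j < m)%N -> sk k != T j.
Proof.
move=> km jm; case: (ltnP j k) => h.
- by rewrite lt_eqF // sk_lt.
- by rewrite gt_eqF // sk_gt.
Qed.

Lemma pk_notin k : (k <= m)%N -> ~ arr_union A (pk k).
Proof.
move=> km [H AH Hp]; have [n0 Hn] := nrmP (hA AH).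
have : lin (nrm H) (pk k) = 0 by move: Hp; rewrite {1}Hn.
have [lH|nl] := pselect (l `<=` H).
- rewrite (lin_pk_l _ AH Hn lH) => /eqP; by rewrite (negbTE (ax0_nz AH Hn)).
- have [jm Hj] := Hs_index AH nl.
  rewrite (lin_pk _ AH Hn nl) => /eqP; rewrite mulf_eq0 (negbTE (nl_lav AH Hn nl)) orbF.
  by rewrite subr_eq0 Hj (negbTE (sk_ne km jm)).
Qed.

Lemma sep_iff k H a : (k <= m)%N -> A H -> H = ker a ->
  (lin a x0 * lin a (pk k) < 0 <-> exists j, [/\ (j < k)%N, (j < m)%N & H = Hs j]).
Proof.
move=> km AH Ha; have [lH|nl] := pselect (l `<=` H).
- rewrite (lin_pk_l _ AH Ha lH); split.
    by move=> h; exfalso; move: h; rewrite -expr2 ltNge sqr_ge0.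
  by move=> [j [_ jm Hj]]; have [_ ] := Hs_prop jm; rewrite -Hj.
- have [jm Hj] := Hs_index AH nl.
  have o := orient AH Ha nl.
  rewrite (lin_pk _ AH Ha nl) mulrCA; split.
  + move=> h; exists (index H slist); split => //.
    rewrite ltnNge; apply/negP => kj; move: h; rewrite pmulr_llt0 // subr_lt0 ltNge.
    by rewrite Hj ltW // sk_gt.
  + move=> [j [jk _ Hj']]; rewrite pmulr_llt0 // subr_lt0 Hj'; exact: sk_lt.
Qed.

Lemma sep_pos k H a : (k <= m)%N -> A H -> H = ker a ->
  ~ (exists j, [/\ (j < k)%N, (j < m)%N & H = Hs j]) -> 0 < lin a x0 * lin a (pk k).
Proof.
move=> km AH Ha nex; have n1 := ax0_nz AH Ha.
have n2 : lin a (pk k) != 0.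
  by apply/eqP => e; apply: (pk_notin km); exists H => //; rewrite Ha.
rewrite lt0r mulf_neq0 //=.
by rewrite leNgt; apply/negP => /(sep_iff km AH Ha).
Qed.

Lemma separatesP x y H a : ~ arr_union A x -> ~ arr_union A y -> A H -> H = ker a ->
  (separates H (cell A x) (cell A y) <-> lin a x * lin a y < 0).
Proof.
move=> nx ny AH Ha; split.
- move=> [b [b0 [Hb [sx sy]]]].
  have bx : 0 < lin b x := sx x (cell_self nx).
  have by_ : lin b y < 0 := sy y (cell_self ny).
  have [al al0 E] := normal_prop (hA AH) Ha Hb.
  rewrite !E mulrACA -expr2 pmulr_rlt0 ?exprn_even_gt0 ?al0 ?orbT //.
  by rewrite pmulr_rlt0.
- move=> neg; have ax := ax0_nz AH Ha.
  have ax' : lin a x != 0 by apply/eqP => e; apply: nx; exists H => //; rewrite Ha.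
  have a0 := hyp_normal_nz (hA AH) Ha.
  case: (ltP 0 (lin a x)) => hx.
  + exists a; split => //; split => //; split => z cz /=.
    * have := cz H a AH Ha; rewrite pmulr_rgt0 //.
    * have := cz H a AH Ha; have hy : lin a y < 0 by rewrite -(pmulr_rlt0 _ hx).
      by rewrite nmulr_rgt0.
  + have hx' : lin a x < 0 by rewrite lt_neqAle ax' hx.
    exists (- a); split; first by rewrite oppr_eq0.
    split.
      rewrite Ha; apply/seteqP; split => z /=; rewrite -scaleN1r linZl.
      * by move=> ->; rewrite mulr0.
      * by move/eqP; rewrite mulf_eq0 oppr_eq0 oner_eq0 /= => /eqP.
    split => z cz /=; rewrite -scaleN1r linZl mulN1r.
    * by rewrite oppr_gt0; have := cz H a AH Ha; rewrite nmulr_rgt0.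
    * have hy : 0 < lin a y by rewrite -(nmulr_rlt0 _ hx').
      by rewrite oppr_lt0; have := cz H a AH Ha; rewrite pmulr_rgt0.
Qed.

Lemma cs_chamber k : (k <= m)%N -> chamber A (cell A (pk k)).
Proof. by move=> km; apply/(chamberP hA); exists (pk k); split => //; exact: pk_notin. Qed.

Lemma loc_chamber : chamber loc (cell loc x0).
Proof. by apply/(chamberP hAl); exists x0; split => //; exact: x0_loc. Qed.

Lemma cs_loc k : (k <= m)%N -> same_loc A l (cell A (pk k)) (cell A x0).
Proof.
move=> km; exists (cell loc x0); split; first exact: loc_chamber.
split; last by move=> y; exact: cell_loc.
move=> y cy H a [AH lH] Ha; have := cy H a AH Ha.
by rewrite (lin_pk_l _ AH Ha lH).
Qed.

Lemma L1_cs k : (k <= m)%N ->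
  L1 A (cell A x0) (cell A (pk k)) = [set H | exists j, [/\ (j < k)%N, (j < m)%N & H = Hs j]].
Proof.
move=> km; apply/seteqP; split => H /=.
- move=> [AH sep]; have [n0 Hn] := nrmP (hA AH).
  apply/(sep_iff km AH Hn); apply/(separatesP hx0 (pk_notin km) AH Hn); exact: sep.
- move=> ex; have [j [_ jm Hj]] := ex; have AH : A H by rewrite Hj; exact: (Hs_prop jm).1.
  have [n0 Hn] := nrmP (hA AH).
  split => //; apply/(separatesP hx0 (pk_notin km) AH Hn); exact/(sep_iff km AH Hn).
Qed.

Lemma cs_complete y : ~ arr_union A y -> cell loc x0 y ->
  exists2 k, (k <= m)%N & cell A (pk k) = cell A y.
Proof.
move=> ny cy; pose k := find (fun H => tau H y <= 0) slist.
have km : (k <= m)%N by rewrite find_size.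
exists k => //; apply: cell_eq => H a AH Ha; rewrite mulrC.
have [lH|nl] := pselect (l `<=` H).
  by rewrite (lin_pk_l _ AH Ha lH) mulrC; exact: cy H a (conj AH lH) Ha.
have [jm Hj] := Hs_index AH nl; set j := index H slist in jm Hj.
rewrite (lin_pk _ AH Ha nl) (lin_tau y AH Ha nl).
have lv := nl_lav AH Ha nl.
have lv2 : 0 < lin a v * lin a v by rewrite -expr2 exprn_even_gt0 // lv orbT.
have ty0 : tau H y != 0.
  apply/eqP => e; apply: ny; exists H => //; rewrite Ha /= (lin_tau y AH Ha nl) e.
  by rewrite oppr0 mul0r.
suff : 0 < (- tau H y) * (sk k - tau H x0) by move=> h; nra.
case: (ltnP j k) => jk.
- have b := before_find set0 jk; rewrite -Hj /= in b; move/negbT: b; rewrite -ltNge => b.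
  have := sk_lt jk km; rewrite -Hj => h; nra.
- have kj := sk_gt jk jm; rewrite -Hj in kj.
  have km' : (k < m)%N by apply: leq_ltn_trans jk jm.
  have tk : tau (Hs k) y <= 0.
    by have := nth_find set0 (a := fun H => tau H y <= 0) (s := slist); rewrite has_find; apply.
  have tj : tau H y < 0.
    move: jk; rewrite leq_eqVlt => /orP [/eqP jk|jk].
      by rewrite lt_neqAle ty0 /=; rewrite Hj -jk.
    have [Ak nlk] := Hs_prop km'.
    have ne : Hs k <> H by move=> e; have kj2 := Hs_inj km' jm (etrans e Hj); move: jk; rewrite kj2 ltnn.
    have := order_pres Ak AH ne nlk nl cy.
    have := T_lt jk jm; rewrite -Hj => hT h; nra.
  nra.
Qed.

Lemma cs_inj i j : (i <= m)%N -> (j <= m)%N -> cell A (pk i) = cell A (pk j) -> i = j.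
Proof.
wlog ij : i j / (i <= j)%N.
  move=> W im jm e; case: (leqP i j) => h; first exact: W.
  by apply/esym; apply: W => //; exact: ltnW.
move=> im jm e; move: ij; rewrite leq_eqVlt => /orP [/eqP //|ij]; exfalso.
have iM : (i < m)%N by apply: leq_trans ij jm.
have [AH nl] := Hs_prop iM; have [n0 Hn] := nrmP (hA AH).
have neg : lin (nrm (Hs i)) x0 * lin (nrm (Hs i)) (pk j) < 0.
  by apply/(sep_iff jm AH Hn); exists i.
have pos : 0 < lin (nrm (Hs i)) x0 * lin (nrm (Hs i)) (pk i).
  apply: (sep_pos im AH Hn) => [[j' [j'i j'm e']]].
  by move: j'i; rewrite (Hs_inj iM j'm e') ltnn.
have c : cell A (pk j) (pk i) by rewrite -e; exact/cell_self/pk_notin.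
have h := c _ _ AH Hn; rewrite mulrC in h.
have := pmul_trans pos h; by rewrite ltNge ltW.
Qed.

Lemma closure_order i j : (i < j)%N -> (j < m)%N ->
  forall y, closure (cell A x0) y -> tau (Hs j) y <= tau (Hs i) y.
Proof.
move=> ij jm y cy; have im : (i < m)%N by apply: ltn_trans ij jm.
have [Ai nli] := Hs_prop im; have [Aj nlj] := Hs_prop jm.
have ne : Hs i <> Hs j by move/(Hs_inj im jm) => e; move: ij; rewrite e ltnn.
rewrite -subr_ge0 -linBl; apply: (closure_lin_ge _ cy) => z cz.
rewrite linBl; have := order_pres Ai Aj ne nli nlj (cell_loc cz).
have := T_lt ij jm => h1 h2; nra.
Qed.

Lemma part2 i j k : (i < j)%N -> (j < k)%N -> (k < m)%N ->
  incident (cell A x0) (ssum l (Hs i `&` Hs k)) ->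
  Hs i `&` Hs j = Hs i `&` Hs k /\ Hs i `&` Hs k = Hs j `&` Hs k.
Proof.
move=> ij jk km [n [[_ nK] [[p0 [p [Kp0 [Kp rf]]]] _]]].
have jm : (j < m)%N by apply: ltn_trans jk km.
have im : (i < m)%N by apply: ltn_trans ij jm.
have [Ai nli] := Hs_prop im; have [Aj nlj] := Hs_prop jm; have [Ak nlk] := Hs_prop km.
have [ni0 Hni] := nrmP (hA Ai); have [nj0 Hnj] := nrmP (hA Aj); have [nk0 Hnk] := nrmP (hA Ak).
have neij : Hs i <> Hs j by move/(Hs_inj im jm) => e; move: ij; rewrite e ltnn.
have nejk : Hs j <> Hs k by move/(Hs_inj jm km) => e; move: jk; rewrite e ltnn.
have neik : Hs i <> Hs k by move/(Hs_inj im km) => e; move: (ltn_trans ij jk); rewrite e ltnn.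
set K := ssum l (Hs i `&` Hs k) in Kp0 Kp nK.
pose g := nrm (Hs j) + lin (nrm (Hs j)) v *: tv (Hs i).
have tauK : forall G y, A G -> ~ l `<=` G -> forall r w, G w -> y = r *: v + w -> tau G y = - r.
  by move=> G y AG nlG r w Gw ->; rewrite linD linZ tau_v // tau_H // mulrN1 addr0.
have g0 : forall y, closure (cell A x0) y -> K y -> lin g y = 0.
  move=> y cy [a la [w [wi wk] ey]]; subst y; move: la; rewrite hl => -[r _ ea]; subst a.
  have ti := tauK _ _ Ai nli r w wi erefl; have tk := tauK _ _ Ak nlk r w wk erefl.
  have o1 := closure_order ij jm cy; have o2 := closure_order jk km cy.
  have tj : tau (Hs j) (r *: v + w) = - r by lra.
  rewrite linDl linZl (lin_tau _ Aj Hnj nlj) tj ti; ring.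
have sub : Hs i `&` Hs k `<=` Hs j.
  move=> z [zi zk].
  have gz : lin g z = lin (nrm (Hs j)) z by rewrite linDl linZl tau_H // mulr0 addr0.
  suff : lin g z = 0 by rewrite gz => e; rewrite Hnj.
  have [[u ->]|nex] := pselect (exists u, z = u *m \matrix_(i0 < n) (p i0 - p0)); last first.
    exfalso; apply: nK; apply: (extend_indep Kp0.2 (fun i0 => (Kp i0).2) _ rf nex).
    have [a la [w [wi wk] ea]] := Kp0.2; move: la; rewrite hl => -[r _ ar]; subst a.
    rewrite -ea.
    exists (r *: v); first by rewrite hl; exists r.
    exists (w + z); last by rewrite addrA.
    split.
      by move: wi zi; rewrite {1 2 3}Hni /= linD => -> ->; rewrite addr0.
    by move: wk zk; rewrite {1 2 3}Hnk /= linD => -> ->; rewrite addr0.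
  rewrite lin_mul big1 // => i0 _; rewrite rowK linB.
  by rewrite (g0 _ (Kp i0).1 (Kp i0).2) (g0 _ Kp0.1 Kp0.2) subrr mulr0.
have hsub : [set x | lin (nrm (Hs i)) x = 0] `&` [set x | lin (nrm (Hs k)) x = 0]
    `<=` [set x | lin (nrm (Hs j)) x = 0] by rewrite -Hni -Hnk -Hnj.
have := three_hyp ni0 nj0 nk0 _ _ _ hsub.
rewrite -Hni -Hnj -Hnk; apply => //.
Qed.

Lemma main_sec :
  exists (t : nat) (cs : nat -> set V) (Hs : nat -> set V),
    [/\ (0 < t)%N /\ cs 0%N = cell A x0,
        (forall k, (k < t)%N -> chamber A (cs k) /\ same_loc A l (cs k) (cell A x0)),
        (forall c', chamber A c' -> same_loc A l c' (cell A x0) ->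
            exists2 k, (k < t)%N & cs k = c'),
        (forall i j, (i < t)%N -> (j < t)%N -> cs i = cs j -> i = j) &
      [/\ L1 A (cell A x0) (cs 0%N) = set0,
          (forall k, (k.+1 < t)%N ->
             ~ L1 A (cell A x0) (cs k) (Hs k) /\
             L1 A (cell A x0) (cs k.+1) = L1 A (cell A x0) (cs k) `|` [set Hs k]),
          L1 A (cell A x0) (cs t.-1) = A `\` localization A l &
          (forall i j k, (i < j)%N -> (j < k)%N -> (k.+1 < t)%N ->
             incident (cell A x0) (ssum l (Hs i `&` Hs k)) ->
             Hs i `&` Hs j = Hs i `&` Hs k /\ Hs i `&` Hs k = Hs j `&` Hs k)]].
Proof.
exists m.+1, (fun k => cell A (pk k)), (fun k => Hs k).
have pk0 : pk 0 = x0 by rewrite /pk /sk eqxx scale0r addr0.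
split.
- by rewrite pk0.
- by move=> k km; split; [exact: cs_chamber | exact: cs_loc].
- move=> c' /(chamberP hA) [y [ny ->]] [C [/(chamberP hAl) [z [nz ->]] [s1 s2]]].
  have cy : cell loc x0 y.
    exact: cell_trans (cell_sym (s2 _ (cell_self hx0))) (s1 _ (cell_self ny)).
  by have [k km e] := cs_complete ny cy; exists k.
- by move=> i j im jm; apply: cs_inj.
split.
- rewrite L1_cs //; apply/seteqP; split => H // [j []] //.
- move=> k km; rewrite !L1_cs //; last exact: ltnW.
  split.
    move=> [j [jk jm e]]; have := Hs_inj km jm e => kj; by move: jk; rewrite kj ltnn.
  apply/seteqP; split => H /=.
  + move=> [j [jk jm e]]; move: jk; rewrite ltnS leq_eqVlt => /orP [/eqP jk|jk].
      by right; rewrite e jk.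
    by left; exists j.
  + case => [[j [jk jm e]]|->]; first by exists j; split => //; exact: ltnW.
    by exists k.
- rewrite /= L1_cs //; apply/seteqP; split => H /=.
  + move=> [j [_ jm ->]]; have [AH nl] := Hs_prop jm; split => // -[_]; exact: nl.
  + move=> [AH nloc]; have nl : ~ l `<=` H by move=> lH; apply: nloc.
    have [jm Hj] := Hs_index AH nl; by exists (index H slist).
- by move=> i j k ij jk km; apply: part2.
Qed.

End Main.


Lemma line_point (R : realType) (d : nat) (l c : set 'rV[R]_d) (v : 'rV[R]_d) :
  v != 0 -> l = [set k *: v | k in [set: R]] -> incident c l ->
  exists w, [/\ w != 0, l = [set k *: w | k in [set: R]] & closure c w].
Proof.
move=> v0 hl [n [[_ nLn] [[q0 [q [Cq0 [Cq rf]]]] _]]].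
case: n q Cq rf nLn => [|n] q Cq rf nLn.
  exfalso; apply: nLn; exists 0, (fun _ => v); split.
    by rewrite hl; exists 0 => //; rewrite scale0r.
  split; first by move=> _; rewrite hl; exists 1 => //; rewrite scale1r.
  apply: inj_row_free => u; rewrite mulmx_sum_row big_ord1 rowK subr0 => /eqP.
  rewrite scaler_eq0 (negbTE v0) orbF => /eqP u0.
  by apply/rowP => i; rewrite ord1 u0 mxE.
have r0 : q ord0 - q0 != 0.
  apply/eqP => e.
  have : row ord0 (\matrix_i (q i - q0)) == 0 by rewrite rowK e.
  rewrite rowE (mulmx_free_eq0 _ rf) => /eqP /matrixP /(_ 0 ord0).
  by rewrite !mxE !eqxx /= => /eqP; rewrite oner_eq0.
have [w [w0 lw cw]] : exists w, [/\ w != 0, l w & closure c w].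
  case: (eqVneq q0 0) => [e|n0].
    exists (q ord0); split; [|exact: (Cq ord0).2|exact: (Cq ord0).1].
    by move: r0; rewrite e subr0.
  by exists q0; split => //; [exact: Cq0.2|exact: Cq0.1].
exists w; split => //.
move: lw; rewrite hl => -[k _ ek].
have k0 : k != 0 by apply: contra w0; rewrite -ek => /eqP ->; rewrite scale0r.
apply/seteqP; split => x /= [k' _ <-].
- by exists (k' / k) => //; rewrite -ek scalerA mulfVK.
- by exists (k' * k) => //; rewrite -ek scalerA.
Qed.

Theorem proposition4p5 (R : realType) (d : nat)
  (A : set (set 'rV[R]_d)) (l c : set 'rV[R]_d) :
  central_arrangement A -> essential A ->
  modular_coatom A l ->
  chamber A c -> incident c l ->
  exists (t : nat) (cs : nat -> set 'rV[R]_d) (Hs : nat -> set 'rV[R]_d),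
    (* (i) the chambers c' with c'/l = c/l, listed as cs 0 = c, ..., cs (t-1) *)
    [/\ (0 < t)%N /\ cs 0%N = c,
        (forall k, (k < t)%N -> chamber A (cs k) /\ same_loc A l (cs k) c),
        (forall c', chamber A c' -> same_loc A l c' c ->
            exists2 k, (k < t)%N & cs k = c'),
        (forall i j, (i < t)%N -> (j < t)%N -> cs i = cs j -> i = j) &
      [/\ L1 A c (cs 0%N) = set0,
          (* each step adds exactly one hyperplane, namely Hs k *)
          (forall k, (k.+1 < t)%N ->
             ~ L1 A c (cs k) (Hs k) /\
             L1 A c (cs k.+1) = L1 A c (cs k) `|` [set Hs k]),
          L1 A c (cs t.-1) = A `\` localization A l &
    (* (ii) for the induced order Hs 0, Hs 1, ... on A \ A_l *)
          (forall i j k, (i < j)%N -> (j < k)%N -> (k.+1 < t)%N ->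
             incident c (ssum l (Hs i `&` Hs k)) ->
             Hs i `&` Hs j = Hs i `&` Hs k /\ Hs i `&` Hs k = Hs j `&` Hs k)]].
Proof.
move=> [hfin hA] _ [[[v [v0 hl]] _] hmodp] hc hinc.
have [w [w0 hlw cw]] := line_point v0 hl hinc.
have [x0 [hx0 ec]] := (chamberP hA c).1 hc.
have [s0 hs0] := (finite_seqP A).1 hfin.
rewrite ec in cw *.
exact: (main_sec hA hlw hmodp hx0 cw hs0).
Qed.
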